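(* Let $H$ be a monoid. Then: (a) $1s\Rightarrow 0s$, $3s\Rightarrow 0s$, $2s\Rightarrow 1s$, $2s\Rightarrow 3s$, $2s\Rightarrow 5s$, $3s\Rightarrow 6s$; (b) $1r\Rightarrow 0r$, $3r\Rightarrow 0r$, $2r\Rightarrow 1r$, $2r\Rightarrow 3r$, $2r\Rightarrow 5r$, $3r\Rightarrow 6r$, $5r\Rightarrow 4r$, $4r\Rightarrow 4'r$, $5r\Rightarrow 5'r$; (c) $kr\Rightarrow ks$ for each $k\in\{0,1,2,3,4,5,6\}$.
   Context: A monoid means a commutative cancellative monoid (written multiplicatively); $H^{\ast}$ is its unit group, $\mathbb{N}=\{1,2,\dots\}$, $\mathbb{N}_0=\{0,1,2,\dots\}$. $a\sim b$ means $a=ub$ with $u\in H^{\ast}$. Elements are relatively prime ($a\perp b$) if all their common divisors are units. $\mathrm{Sqf}\,H$: elements not of the form $b^2c$ with $b\notin H^{\ast}$. $\mathrm{Gpr}\,H$: elements $r$ such that $r\mid b^n$ ($n\in\mathbb{N}$) implies $r\mid b$. Let $S$ stand for $\mathrm{Sqf}\,H$ (conditions with suffix s) or $\mathrm{Gpr}\,H$ (suffix r). For every $a\in H$: (0) there are $n\in\mathbb{N}$, $s_1,\dots,s_n\in S$ with $a=s_1\cdots s_n$; (1) there are $n\in\mathbb{N}$, $s_1,\dots,s_n\in S$ with $s_i\perp s_j$ for $i\ne j$ and $a=s_1s_2^2s_3^3\cdots s_n^n$; (2) there are $n\in\mathbb{N}$, $s_1,\dots,s_n\in S$ with $s_i\mid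 s_{i+1}$ ($i=1,\dots,n-1$) and $a=s_1\cdots s_n$; (3) there are $n\in\mathbb{N}_0$, $s_0,\dots,s_n\in S$ with $a=s_0s_1^2s_2^{2^2}\cdots s_n^{2^n}$; (4) there are $b\in H$, $c\in S$ with $b\perp c$, $a=bc$, and some $d\in S$ with $d^2\mid b$ and $b\mid d^n$ for some $n\in\mathbb{N}$; (4') there are $b\in H$, $c\in S$ with $b\perp c$, $a=bc$, and for every $d\in S$, $d\mid b$ implies $d^2\mid b$; (5) there are $b\in H$, $c\in S$ with $a=bc$ and $a\mid c^n$ for some $n\in\mathbb{N}$; (5') there are $b\in H$, $c\in S$ with $a=bc$ and for every $d\in S$, $d\mid a$ implies $d\mid c$; (6) there are $b\in H$, $c\in S$ with $a=b^2c$. Condition $ks$ (resp. $kr$) is condition $(k)$ with $S=\mathrm{Sqf}\,H$ (resp. $S=\mathrm{Gpr}\,H$). *)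

(* Defs.v *)
From Stdlib Require Import Arith.

(* A monoid = commutative cancellative monoid, written multiplicatively. *)
Record CMon := {
  car :> Type;
  mul : car -> car -> car;
  one : car;
  mulA : forall a b c, mul a (mul b c) = mul (mul a b) c;
  mulC : forall a b, mul a b = mul b a;
  mul1 : forall a, mul one a = a;
  mul_cancel : forall a b c, mul a b = mul a c -> b = c
}.

Arguments mul {c0} _ _.
Arguments one {c0}.

Section Defs.
Variable H : CMon.

Fixpoint pow (x : H) (k : nat) : H :=
  match k with 0 => one | S k' => mul x (pow x k') end.

Fixpoint prodf (f : nat -> H) (n : nat) : H :=
  match n with 0 => one | S n' => mul (prodf f n') (f (S n')) end.

Definition unit (u : H) : Prop := exists v : H, mul u v = one.
Definition dvd (a b : H) : Prop := exists c : H, b = mul a c.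
Definition assoc (a b : H) : Prop := exists u : H, unit u /\ a = mul u b.
Definition coprime (a b : H) : Prop :=
  forall d : H, dvd d a -> dvd d b -> unit d.

Definition Sqf (a : H) : Prop :=
  ~ (exists b c : H, ~ unit b /\ a = mul (pow b 2) c).
Definition Gpr (r : H) : Prop :=
  forall (b : H) (n : nat), 1 <= n -> dvd r (pow b n) -> dvd r b.

Variable P : H -> Prop.

Definition cond0 : Prop := forall a : H,
  exists (n : nat) (s : nat -> H), 1 <= n /\
    (forall i, 1 <= i <= n -> P (s i)) /\ a = prodf s n.

Definition cond1 : Prop := forall a : H,
  exists (n : nat) (s : nat -> H), 1 <= n /\
    (forall i, 1 <= i <= n -> P (s i)) /\
    (forall i j, 1 <= i <= n -> 1 <= j <= n -> i <> j -> coprime (s i) (s j)) /\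
    a = prodf (fun i => pow (s i) i) n.

Definition cond2 : Prop := forall a : H,
  exists (n : nat) (s : nat -> H), 1 <= n /\
    (forall i, 1 <= i <= n -> P (s i)) /\
    (forall i, 1 <= i < n -> dvd (s i) (s (Datatypes.S i))) /\
    a = prodf s n.

Definition cond3 : Prop := forall a : H,
  exists (n : nat) (s : nat -> H),
    (forall i, 0 <= i <= n -> P (s i)) /\
    a = mul (s 0) (prodf (fun i => pow (s i) (2 ^ i)) n).

Definition cond4 : Prop := forall a : H,
  exists b c : H, P c /\ coprime b c /\ a = mul b c /\
    exists d : H, P d /\ dvd (pow d 2) b /\
      exists n : nat, 1 <= n /\ dvd b (pow d n).

Definition cond4' : Prop := forall a : H,
  exists b c : H, P c /\ coprime b c /\ a = mul b c /\
    forall d : H, P d -> dvd d b -> dvd (pow d 2) b.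

Definition cond5 : Prop := forall a : H,
  exists b c : H, P c /\ a = mul b c /\
    exists n : nat, 1 <= n /\ dvd a (pow c n).

Definition cond5' : Prop := forall a : H,
  exists b c : H, P c /\ a = mul b c /\
    forall d : H, P d -> dvd d a -> dvd d c.

Definition cond6 : Prop := forall a : H,
  exists b c : H, P c /\ a = mul (pow b 2) c.

End Defs.

(* Main.v *)
Require Import Defs.
From Stdlib Require Import Arith Lia Classical.

Section S.
Variable H : CMon.
Implicit Types a b c d x y z : H.

Lemma mul1r x : mul x one = x.
Proof. rewrite mulC; apply mul1. Qed.

Lemma mulAC x y z : mul (mul x y) z = mul (mul x z) y.
Proof. rewrite <- !mulA, (mulC H y). reflexivity. Qed.

Lemma mulCA x y z : mul x (mul y z) = mul y (mul x z).
Proof. rewrite !mulA, (mulC H x). reflexivity. Qed.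

Lemma dvd_refl x : dvd H x x.
Proof. exists one. now rewrite mul1r. Qed.

Lemma dvd_trans x y z : dvd H x y -> dvd H y z -> dvd H x z.
Proof. intros [u ->] [v ->]. exists (mul u v). now rewrite mulA. Qed.

Lemma dvd_mulr x y : dvd H x (mul x y).
Proof. now exists y. Qed.

Lemma dvd_mull x y : dvd H x (mul y x).
Proof. exists y. apply mulC. Qed.

Lemma dvd_mul2 x y u v : dvd H x y -> dvd H u v -> dvd H (mul x u) (mul y v).
Proof. intros [p ->] [q ->]. exists (mul p q).
 rewrite <- !mulA. f_equal. rewrite !mulA. rewrite (mulC H p u). reflexivity. Qed.

Lemma dvd_cancel x y z : dvd H (mul z x) (mul z y) -> dvd H x y.
Proof. intros [p Hp]. exists p. apply (mul_cancel H z). now rewrite mulA. Qed.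

Lemma dvd_one x : dvd H one x.
Proof. exists x. now rewrite mul1. Qed.

Lemma pow1 x : pow H x 1 = x.
Proof. simpl. apply mul1r. Qed.

Lemma pow2 x : pow H x 2 = mul x x.
Proof. simpl. now rewrite mul1r. Qed.

Lemma pow_add x m n : pow H x (m + n) = mul (pow H x m) (pow H x n).
Proof. induction m; simpl. now rewrite mul1. rewrite IHm. apply mulA. Qed.

Lemma pow_mul2 x y n : pow H (mul x y) n = mul (pow H x n) (pow H y n).
Proof. induction n; simpl. now rewrite mul1. rewrite IHn.
 rewrite <- !mulA. f_equal. apply mulCA. Qed.

Lemma dvd_pow x n : 1 <= n -> dvd H x (pow H x n).
Proof. intros Hn. destruct n. lia. simpl. apply dvd_mulr. Qed.

Lemma dvd_pow2 x y n : dvd H x y -> dvd H (pow H x n) (pow H y n).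
Proof. intros Hd. induction n; simpl. apply dvd_refl. now apply dvd_mul2. Qed.

Lemma unit_mul x y : mul x y = one -> unit H x.
Proof. intros E. now exists y. Qed.

Lemma prodf_ext (f g : nat -> H) n : (forall i, 1 <= i <= n -> f i = g i) -> prodf H f n = prodf H g n.
Proof. induction n; intros E; simpl. reflexivity. rewrite IHn, E. reflexivity. lia. intros; apply E; lia. Qed.

Lemma prodf_mul (f g : nat -> H) n : prodf H (fun i => mul (f i) (g i)) n = mul (prodf H f n) (prodf H g n).
Proof. induction n; simpl. now rewrite mul1. rewrite IHn. rewrite <- !mulA. f_equal. apply mulCA. Qed.

Lemma prodf_shift (f : nat -> H) n : prodf H f (S n) = mul (f 1) (prodf H (fun j => f (S j)) n).
Proof. induction n. simpl. now rewrite mul1, mul1r.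
 change (prodf H f (S (S n))) with (mul (prodf H f (S n)) (f (S (S n)))). rewrite IHn. simpl. apply eq_sym, mulA. Qed.

Lemma prodf_const x n : prodf H (fun _ => x) n = pow H x n.
Proof. induction n; simpl. reflexivity. rewrite IHn. apply mulC. Qed.

Lemma prodf_dvd (f g : nat -> H) n : (forall i, 1 <= i <= n -> dvd H (f i) (g i)) -> dvd H (prodf H f n) (prodf H g n).
Proof. induction n; intros E; simpl. apply dvd_refl. apply dvd_mul2. apply IHn; intros; apply E; lia. apply E; lia. Qed.

Lemma dvd_prodf (f : nat -> H) n i : 1 <= i <= n -> dvd H (f i) (prodf H f n).
Proof. induction n; intros Hi. lia. simpl. destruct (Nat.eq_dec i (S n)). subst. apply dvd_mull.
 eapply dvd_trans. apply IHn; lia. apply dvd_mulr. Qed.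

Lemma pow_prodf (f : nat -> H) n k : pow H (prodf H f n) k = prodf H (fun i => pow H (f i) k) n.
Proof. induction n; simpl. induction k; simpl; auto. rewrite IHk. now rewrite mul1.
 rewrite pow_mul2, IHn. reflexivity. Qed.


Lemma Sqf_D x y : dvd H x y -> Sqf H y -> Sqf H x.
Proof. intros [z ->] Hy [b [c [Hb E]]]. apply Hy. exists b, (mul c z). split; auto.
 rewrite E. apply eq_sym, mulA. Qed.

Lemma Sqf_S y d : Sqf H y -> dvd H (pow H d 2) y -> unit H d.
Proof. intros Hy [e E]. apply NNPP; intro Hn. apply Hy. exists d, e. auto. Qed.

Lemma Sqf_O : Sqf H one.
Proof. intros [b [c [Hb E]]]. apply Hb. rewrite pow2 in E. exists (mul b c). rewrite mulA. auto. Qed.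

Lemma Gpr_O : Gpr H one.
Proof. intros b n _ _. apply dvd_one. Qed.

Lemma Gpr_D x y : dvd H x y -> Gpr H y -> Gpr H x.
Proof. intros [z ->] Hy b n Hn Hd.
 assert (E : dvd H (mul x z) (pow H (mul z b) n)).
 { rewrite pow_mul2. rewrite (mulC H x). apply dvd_mul2. now apply dvd_pow. exact Hd. }
 apply Hy in E; auto. apply (dvd_cancel _ _ z). now rewrite (mulC H z x). Qed.

Lemma Gpr_S y d : Gpr H y -> dvd H (pow H d 2) y -> unit H d.
Proof. intros Hy [e E]. subst y.
 assert (E : dvd H (mul (pow H d 2) e) (pow H (mul d e) 2)).
 { rewrite pow_mul2. apply dvd_mul2. apply dvd_refl. rewrite pow2. apply dvd_mulr. }
 apply Hy in E; [|lia]. destruct E as [z Ez]. rewrite pow2 in Ez.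
 exists z. apply (mul_cancel H (mul d e)). rewrite mul1r.
 rewrite mulA. rewrite (mulAC d e d). rewrite <- Ez. reflexivity. Qed.

Lemma Gpr_Sqf x : Gpr H x -> Sqf H x.
Proof. intros Hx [b [c [Hb E]]]. apply Hb. apply (Gpr_S x); auto. exists c; auto. Qed.


Lemma prodf_S (f : nat -> H) n : prodf H f (S n) = mul (prodf H f n) (f (S n)).
Proof. reflexivity. Qed.

Lemma pow_pow2 x e : pow H (pow H x e) 2 = pow H x (e + e).
Proof. rewrite pow2, pow_add. reflexivity. Qed.

Lemma mul4 a b c d : mul (mul a b) (mul c d) = mul (mul a c) (mul b d).
Proof. rewrite <- !mulA. f_equal. apply mulCA. Qed.

Lemma coprime_sym a b : coprime H a b -> coprime H b a.
Proof. intros Hc d H1 H2. now apply Hc. Qed.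

Lemma chain_dvd (s : nat -> H) n : (forall i, 1 <= i < n -> dvd H (s i) (s (S i))) ->
  forall i j, 1 <= i <= j -> j <= n -> dvd H (s i) (s j).
Proof. intros Hc i j Hij Hj. replace j with (i + (j - i)) by lia.
 assert (Hk : i + (j - i) <= n) by lia. revert Hk. generalize (j - i) as k. induction k; intros Hk.
 rewrite Nat.add_0_r. apply dvd_refl.
 eapply dvd_trans. apply IHk; lia. rewrite Nat.add_succ_r. apply Hc. lia. Qed.

Lemma pow2_ge1 i : 1 <= 2 ^ i.
Proof. induction i; simpl; lia. Qed.

Section G.
Variable P : H -> Prop.
Hypothesis PD : forall x y, dvd H x y -> P y -> P x.
Hypothesis PS : forall y d, P y -> dvd H (pow H d 2) y -> unit H d.
Hypothesis PO : P one.

Definition Rep a := exists n s, 1 <= n /\ (forall i, 1 <= i <= n -> P (s i)) /\ a = prodf H s n.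

Lemma Rep_P x : P x -> Rep x.
Proof. intros Hx. exists 1, (fun _ => x). repeat split; auto. simpl. now rewrite mul1. Qed.

Lemma prodf_app (s t : nat -> H) n m :
  prodf H (fun i => if i <=? n then s i else t (i - n)) (n + m) = mul (prodf H s n) (prodf H t m).
Proof. induction m.
 - rewrite Nat.add_0_r. simpl. rewrite mul1r. apply prodf_ext. intros i Hi.
   destruct (Nat.leb_spec i n); [reflexivity|lia].
 - rewrite Nat.add_succ_r, !prodf_S, IHm. rewrite <- mulA. f_equal.
   destruct (Nat.leb_spec (S (n + m)) n); [lia|]. replace (S (n + m) - n) with (S m) by lia. reflexivity. Qed.

Lemma Rep_mul x y : Rep x -> Rep y -> Rep (mul x y).
Proof. intros [n [s [Hn [Hs ->]]]] [m [t [Hm [Ht ->]]]].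
 exists (n + m), (fun i => if i <=? n then s i else t (i - n)). repeat split.
 lia. intros i Hi. destruct (Nat.leb_spec i n). apply Hs; lia. apply Ht; lia.
 now rewrite prodf_app. Qed.

Lemma Rep_pow x k : P x -> 1 <= k -> Rep (pow H x k).
Proof. intros Hx Hk. induction k. lia. destruct k. rewrite pow1. now apply Rep_P.
 simpl pow. apply Rep_mul. now apply Rep_P. apply IHk; lia. Qed.

Lemma Rep_prodf (f : nat -> H) n : 1 <= n -> (forall i, 1 <= i <= n -> Rep (f i)) -> Rep (prodf H f n).
Proof. induction n; intros Hn Hf. lia. destruct n. simpl. rewrite mul1. apply Hf; lia.
 rewrite prodf_S. apply Rep_mul. apply IHn; [lia|intros; apply Hf; lia]. apply Hf; lia. Qed.

Lemma Rep_mulprod x (f : nat -> H) n : Rep x -> (forall i, 1 <= i <= n -> Rep (f i)) -> Rep (mul x (prodf H f n)).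
Proof. induction n; intros Hx Hf. simpl. now rewrite mul1r.
 rewrite prodf_S, mulA. apply Rep_mul. apply IHn; auto; intros; apply Hf; lia. apply Hf; lia. Qed.

Lemma i1_0 : cond1 H P -> cond0 H P.
Proof. intros C a. destruct (C a) as [n [s [Hn [Hs [_ ->]]]]].
 apply Rep_prodf; auto. intros i Hi. apply Rep_pow. apply Hs; lia. lia. Qed.

Lemma i3_0 : cond3 H P -> cond0 H P.
Proof. intros C a. destruct (C a) as [n [s [Hs ->]]].
 apply Rep_mulprod. apply Rep_P, Hs; lia. intros i Hi. apply Rep_pow. apply Hs; lia. apply pow2_ge1. Qed.

Lemma i2_5 : cond2 H P -> cond5 H P.
Proof. intros C a. destruct (C a) as [n [s [Hn [Hs [Hc ->]]]]].
 destruct n as [|m]. lia. exists (prodf H s m), (s (S m)). split. apply Hs; lia. split. reflexivity.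
 exists (S m). split. lia. rewrite <- prodf_const. apply prodf_dvd. intros i Hi.
 apply (chain_dvd s (S m)); auto; lia. Qed.

Lemma i3_6 : cond3 H P -> cond6 H P.
Proof. intros C a. destruct (C a) as [n [s [Hs ->]]].
 exists (prodf H (fun i => pow H (s i) (2 ^ (i - 1))) n), (s 0). split. apply Hs; lia.
 rewrite mulC. f_equal. rewrite pow_prodf. apply prodf_ext. intros i Hi.
 rewrite pow_pow2. f_equal. destruct i. lia. simpl. rewrite Nat.sub_0_r. lia. Qed.


Lemma chain1 (s : nat -> H) n : 1 <= n -> (forall i, 1 <= i <= n -> P (s i)) ->
  (forall i, 1 <= i < n -> dvd H (s i) (s (S i))) ->
  exists t : nat -> H, (forall k, 1 <= k <= n -> P (t k)) /\
    (forall i j, 1 <= i <= n -> 1 <= j <= n -> i <> j -> coprime H (t i) (t j)) /\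
    prodf H t n = s n /\ prodf H s n = prodf H (fun k => pow H (t k) k) n.
Proof.
 induction n; intros Hn Hs Hc. lia.
 destruct n as [|n].
 - exists (fun _ => s 1). repeat split.
   + intros; apply Hs; lia.
   + intros; lia.
   + simpl. now rewrite mul1.
   + simpl. now rewrite !mul1, mul1r.
 - destruct IHn as [t [Ht [Hco [Hpt Hps]]]]; [lia| intros; apply Hs; lia | intros; apply Hc; lia |].
   destruct (Hc (S n)) as [q Hq]; [lia|].
   set (t' := fun k => match k with 0 | 1 => q | S k' => t k' end).
   assert (Et : forall j, 1 <= j -> t' (S j) = t j) by (intros [|j] Hj; [lia|reflexivity]).
   assert (Hq2 : forall j, 1 <= j <= S n -> coprime H q (t j)).
   { intros j Hj d H1 H2. apply (PS (s (S (S n)))). apply Hs; lia.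
     rewrite Hq, pow2. apply dvd_mul2; auto. rewrite <- Hpt. eapply dvd_trans. exact H2. now apply dvd_prodf. }
   exists t'. repeat split.
   + intros [|[|k]] Hk. lia. apply (PD _ (s (S (S n)))). rewrite Hq. apply dvd_mull. apply Hs; lia.
     rewrite Et by lia. apply Ht; lia.
   + intros [|[|i]] [|[|j]] Hi Hj Hij; try lia.
     * rewrite (Et (S j)) by lia. apply Hq2; lia.
     * rewrite (Et (S i)) by lia. apply coprime_sym, Hq2; lia.
     * rewrite (Et (S i)), (Et (S j)) by lia. apply Hco; lia.
   + rewrite prodf_shift. rewrite (prodf_ext _ t); [|intros; apply Et; lia].
     rewrite Hpt, Hq. simpl t'. apply mulC.
   + rewrite prodf_S, Hps, Hq. rewrite (prodf_shift (fun k => pow H (t' k) k)).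
     assert (E2 : prodf H (fun j => pow H (t' (S j)) (S j)) (S n) = prodf H (fun j => mul (t j) (pow H (t j) j)) (S n)).
     { apply prodf_ext. intros i Hi. rewrite Et by lia. reflexivity. }
     rewrite E2.
     rewrite prodf_mul, Hpt. simpl t'. rewrite pow1.
     rewrite (mulC H (prodf H _ _)), <- mulA. symmetry. apply mulCA.
Qed.

Lemma i2_1 : cond2 H P -> cond1 H P.
Proof. intros C a. destruct (C a) as [n [s [Hn [Hs [Hc ->]]]]].
 destruct (chain1 s n) as [t [Ht [Hco [_ E]]]]; auto.
 exists n, t. repeat split; auto. Qed.


Definition C3 a := exists (n : nat) (s : nat -> H),
    (forall i, 0 <= i <= n -> P (s i)) /\
    a = mul (s 0) (prodf H (fun i => pow H (s i) (2 ^ i)) n).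

Lemma C3_one : C3 one.
Proof. exists 0, (fun _ => one). split. intros; auto. simpl. now rewrite mul1. Qed.

Lemma C3_sq x b : P x -> C3 b -> C3 (mul x (pow H b 2)).
Proof. intros Hx [m [r [Hr ->]]].
 exists (S m), (fun i => match i with 0 => x | S i' => r i' end). split.
 - intros [|i] Hi; auto. apply Hr; lia.
 - f_equal. rewrite prodf_shift. rewrite pow_mul2. f_equal.
   rewrite pow_prodf. apply prodf_ext. intros i Hi. rewrite pow_pow2. f_equal. simpl. lia.
Qed.

Lemma pairing (s : nat -> H) m : (forall i, i < 2 * m -> dvd H (s i) (s (S i))) ->
  exists x, dvd H x (s (2 * m)) /\
    mul (prodf H s (2 * m)) (s 0) = mul x (pow H (prodf H (fun i => s (2 * i - 1)) m) 2).
Proof.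
 induction m; intros Hc.
 - exists (s 0). split. apply dvd_refl. simpl. rewrite !mul1. now rewrite mul1r.
 - destruct IHm as [x [Hx E]]. intros; apply Hc; lia.
   destruct (Hc (S (2 * m))) as [y Hy]. lia.
   exists (mul x y). split.
   + replace (2 * S m) with (S (S (2 * m))) by lia. rewrite Hy. apply dvd_mul2; [|apply dvd_refl].
     eapply dvd_trans. exact Hx. apply Hc. lia.
   + replace (2 * S m) with (S (S (2 * m))) by lia. rewrite !prodf_S. rewrite Hy.
     replace (2 * S m - 1) with (S (2 * m)) by lia.
     rewrite pow_mul2, (pow2 (s (S (2 * m)))).
     set (A := prodf H s (2 * m)). set (a := s (S (2 * m))).
     set (B := pow H (prodf H (fun i => s (2 * i - 1)) m) 2). fold A in E. fold B in E.
     transitivity (mul (mul A (s 0)) (mul (mul a a) y)).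
     { rewrite <- !mulA. f_equal. symmetry. rewrite mulC. rewrite <- !mulA. reflexivity. }
     rewrite E. rewrite (mulC H (mul a a) y). apply mul4.
Qed.

Lemma chain3 N : forall n (s : nat -> H), n <= N -> (forall i, 1 <= i <= n -> P (s i)) ->
  (forall i, 1 <= i < n -> dvd H (s i) (s (S i))) -> C3 (prodf H s n).
Proof.
 induction N; intros n s Hn Hs Hc.
 - replace n with 0 by lia. apply C3_one.
 - assert (Hd := chain_dvd s n Hc).
   destruct (Nat.Even_or_Odd n) as [[m Hm]|[m Hm]]; subst n.
   + set (st := fun i => match i with 0 => one | _ => s i end).
     assert (Est : forall i, 1 <= i -> st i = s i) by (intros [|i] Hi; [lia|reflexivity]).
     destruct (pairing st m) as [x [Hx E]].
     { intros [|i] Hi. apply dvd_one. rewrite !Est by lia. apply Hc. lia. }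
     assert (E' : prodf H s (2 * m) = prodf H st (2 * m)).
     { apply prodf_ext. intros; rewrite Est; auto; lia. }
     rewrite E'. replace (prodf H st (2 * m)) with (mul (prodf H st (2 * m)) (st 0)) by (simpl; apply mul1r).
     rewrite E. apply C3_sq.
     * destruct m. apply (PD _ one); auto. apply (PD _ (s (2 * S m))). rewrite <- Est. auto. lia. apply Hs; lia.
     * apply IHN. lia. intros i Hi. rewrite Est by lia. apply Hs; lia.
       intros i Hi. rewrite !Est by lia. apply Hd; lia.
   + set (st := fun i => s (S i)).
     destruct (pairing st m) as [x [Hx E]].
     { intros i Hi. apply Hc. lia. }
     replace (2 * m + 1) with (S (2 * m)) by lia. rewrite prodf_shift, mulC. change (C3 (mul (prodf H st (2 * m)) (st 0))). rewrite E.
     apply C3_sq.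
     * apply (PD _ (st (2 * m))); auto. apply Hs; lia.
     * apply IHN. lia. intros i Hi. apply Hs; lia.
       intros i Hi. apply Hd; lia.
Qed.

Lemma i2_3 : cond2 H P -> cond3 H P.
Proof. intros C a. destruct (C a) as [n [s [Hn [Hs [Hc ->]]]]].
 apply (chain3 n); auto. Qed.

End G.

Lemma g5_4 : cond5 H (Gpr H) -> cond4 H (Gpr H).
Proof. intros C a.
 destruct (C a) as [b [c [Hc [Ea [n [Hn Han]]]]]].
 destruct (C b) as [b' [d [Hd [Eb [m [Hm Hbm]]]]]].
 assert (Hdc : dvd H d c).
 { apply (Hd c n Hn). eapply dvd_trans; [|exact Han]. rewrite Ea, Eb.
   eapply dvd_trans; [apply dvd_mull|]. apply dvd_mulr. }
 destruct Hdc as [e Ee].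
 exists (mul b d), e. split; [|split; [|split]].
 - apply (Gpr_D e c); auto. rewrite Ee. apply dvd_mull.
 - intros f H1 H2. assert (Hf : Gpr H f) by (apply (Gpr_D f e); auto; apply (Gpr_D e c); auto; rewrite Ee; apply dvd_mull).
   apply (Gpr_S c); auto. rewrite Ee, pow2. apply dvd_mul2; auto.
   apply (Hf d (S m)). lia. eapply dvd_trans. exact H1. simpl. rewrite mulC. apply dvd_mul2; auto. apply dvd_refl.
 - rewrite Ea, Ee. apply mulA.
 - exists d. split; auto. split.
   + rewrite Eb, pow2. exists b'. rewrite (mulC H b' d), <- mulA, (mulC H b' d), mulA. reflexivity.
   + exists (S m). split. lia. simpl. rewrite mulC. apply dvd_mul2; auto. apply dvd_refl.
Qed.

Lemma g4_4' : cond4 H (Gpr H) -> cond4' H (Gpr H).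
Proof. intros C a. destruct (C a) as [b [c [Hc [Hco [Ea [d [Hd [Hd2 [n [Hn Hbn]]]]]]]]]].
 exists b, c. repeat split; auto. intros e He Heb.
 eapply dvd_trans; [|exact Hd2]. apply dvd_pow2. apply (He d n Hn). eapply dvd_trans; eauto. Qed.

Lemma g5_5' : cond5 H (Gpr H) -> cond5' H (Gpr H).
Proof. intros C a. destruct (C a) as [b [c [Hc [Ea [n [Hn Han]]]]]].
 exists b, c. repeat split; auto. intros d Hd Hda. apply (Hd c n Hn). eapply dvd_trans; eauto. Qed.

End S.

Theorem proposition4p1 (H : CMon) :
  (* (a) *)
  (cond1 H (Sqf H) -> cond0 H (Sqf H)) /\
  (cond3 H (Sqf H) -> cond0 H (Sqf H)) /\
  (cond2 H (Sqf H) -> cond1 H (Sqf H)) /\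
  (cond2 H (Sqf H) -> cond3 H (Sqf H)) /\
  (cond2 H (Sqf H) -> cond5 H (Sqf H)) /\
  (cond3 H (Sqf H) -> cond6 H (Sqf H)) /\
  (* (b) *)
  (cond1 H (Gpr H) -> cond0 H (Gpr H)) /\
  (cond3 H (Gpr H) -> cond0 H (Gpr H)) /\
  (cond2 H (Gpr H) -> cond1 H (Gpr H)) /\
  (cond2 H (Gpr H) -> cond3 H (Gpr H)) /\
  (cond2 H (Gpr H) -> cond5 H (Gpr H)) /\
  (cond3 H (Gpr H) -> cond6 H (Gpr H)) /\
  (cond5 H (Gpr H) -> cond4 H (Gpr H)) /\
  (cond4 H (Gpr H) -> cond4' H (Gpr H)) /\
  (cond5 H (Gpr H) -> cond5' H (Gpr H)) /\
  (* (c) *)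
  (cond0 H (Gpr H) -> cond0 H (Sqf H)) /\
  (cond1 H (Gpr H) -> cond1 H (Sqf H)) /\
  (cond2 H (Gpr H) -> cond2 H (Sqf H)) /\
  (cond3 H (Gpr H) -> cond3 H (Sqf H)) /\
  (cond4 H (Gpr H) -> cond4 H (Sqf H)) /\
  (cond5 H (Gpr H) -> cond5 H (Sqf H)) /\
  (cond6 H (Gpr H) -> cond6 H (Sqf H)).
Proof.
 pose proof (Gpr_Sqf H) as GS.
 Ltac gen X H := eapply (X H); first [exact (Sqf_D H) | exact (Sqf_S H) | exact (Sqf_O H)
   | exact (Gpr_D H) | exact (Gpr_S H) | exact (Gpr_O H) | idtac].
 repeat split.
 - gen i1_0 H.
 - gen i3_0 H.
 - gen i2_1 H.
 - gen i2_3 H.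
 - gen i2_5 H.
 - gen i3_6 H.
 - gen i1_0 H.
 - gen i3_0 H.
 - gen i2_1 H.
 - gen i2_3 H.
 - gen i2_5 H.
 - gen i3_6 H.
 - apply g5_4.
 - apply g4_4'.
 - apply g5_5'.
 - intros C a. destruct (C a) as [n [s [A1 [A2 A3]]]]. exists n, s. repeat split; auto.
 - intros C a. destruct (C a) as [n [s [A1 [A2 [A3 A4]]]]]. exists n, s. repeat split; auto.
 - intros C a. destruct (C a) as [n [s [A1 [A2 [A3 A4]]]]]. exists n, s. repeat split; auto.
 - intros C a. destruct (C a) as [n [s [A1 A2]]]. exists n, s. repeat split; auto.
 - intros C a. destruct (C a) as [b [c [A1 [A2 [A3 [d [A4 A5]]]]]]]. exists b, c. repeat split; auto. exists d. auto.
 - intros C a. destruct (C a) as [b [c [A1 A2]]]. exists b, c. auto.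
 - intros C a. destruct (C a) as [b [c [A1 A2]]]. exists b, c. auto.
Qed.
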